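(* For every $n\in\mathbb{N}$, the number of labeled split graphs with vertex set $[n]$ whose questioning set has size at least $2$ equals $$2\sum_{q=2}^{n}\sum_{c=0}^{n-q}\binom{n}{q}\binom{n-q}{c}\big(2^{\,n-c-q}-1\big)^{c},$$ with the convention $0^0=1$.
   Context: $[n]=\{1,\dots,n\}$; labeled graphs on $[n]$ are distinct if their edge sets differ. A split partition of a graph $G$ is an ordered pair $(C',I')$ of disjoint sets (possibly empty) with $C'\cup I'=V(G)$, $C'$ a clique and $I'$ an independent set; $G$ is a split graph if it has a split partition. The questioning set of a split graph is the set of vertices $v$ for which there is a split partition with $v\in C'$ and a split partition with $v\in I'$. *)

(* Defs.v *)
(* Labeled graphs on [n] = vertex type 'I_n (vertices 0..n-1),
   a graph is identified with its edge set: a set of 2-element subsets. *)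
From mathcomp Require Import all_boot.
Set Implicit Arguments. Unset Strict Implicit. Unset Printing Implicit Defensive.

Section Split.
Variable n : nat.
Implicit Types (G : {set {set 'I_n}}) (C I : {set 'I_n}).

Definition is_graph G : bool := [forall e in G, #|e| == 2].

Definition adj G (x y : 'I_n) : bool := (x != y) && ([set x; y] \in G).

Definition is_clique G C : bool :=
  [forall x in C, forall y in C, (x != y) ==> adj G x y].

Definition is_indep G I : bool :=
  [forall x in I, forall y in I, ~~ adj G x y].

Definition split_partition G C I : bool :=
  [&& [disjoint C & I], C :|: I == [set: 'I_n], is_clique G C & is_indep G I].

Definition is_split G : bool := [exists C, exists I, split_partition G C I].

Definition questioning_set G : {set 'I_n} :=
  [set v | [exists C, exists I, split_partition G C I && (v \in C)]
        && [exists C, exists I, split_partition G C I && (v \in I)]].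
End Split.

(* Main.v *)
Require Import Defs.
From mathcomp Require Import all_boot.
Set Implicit Arguments. Unset Strict Implicit. Unset Printing Implicit Defensive.

Section S.
Variable n : nat.
Notation V := 'I_n.
Implicit Types (G : {set {set V}}) (C I Q A : {set V}).

Lemma adjC G x y : adj G x y = adj G y x.
Proof. by rewrite /adj eq_sym setUC. Qed.

Lemma adjxx G x : adj G x x = false.
Proof. by rewrite /adj eqxx. Qed.

Lemma adj_neq G x y : adj G x y -> x != y.
Proof. by case/andP. Qed.

Lemma cliqueP G C : reflect (forall x y, x \in C -> y \in C -> x != y -> adj G x y) (is_clique G C).
Proof.
apply: (iffP forall_inP) => [H x y xC yC nxy | H x xC].
  by move/forall_inP: (H x xC) => /(_ y yC) /implyP; apply.
by apply/forall_inP => y yC; apply/implyP; apply: H.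
Qed.

Lemma indepP G I : reflect (forall x y, x \in I -> y \in I -> ~~ adj G x y) (is_indep G I).
Proof.
apply: (iffP forall_inP) => [H x y xC yC | H x xC].
  by move/forall_inP: (H x xC) => /(_ y yC).
by apply/forall_inP => y yC; apply: H.
Qed.

Definition good G C := is_clique G C && is_indep G (~: C).

Lemma disj_cover C I : [disjoint C & I] -> C :|: I == [set: V] -> I = ~: C.
Proof.
move=> d /eqP u; apply/setP => v; rewrite inE.
have : v \in C :|: I by rewrite u inE.
rewrite inE; case vC: (v \in C) => /= vI; first exact: disjointFr d vC.
by [].

Qed.

Lemma split_good G C I : split_partition G C I = (I == ~: C) && good G C.
Proof.
rewrite /split_partition /good.
apply/idP/idP => [/and4P[d u c i] | /andP[/eqP-> /andP[c i]]].
  by have e := disj_cover d u; rewrite -e eqxx c /= i.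
apply/and4P; split => //; first by rewrite -setI_eq0 setICr.
by apply/eqP/setP => v; rewrite !inE; case: (v \in C).
Qed.

Lemma is_split_good G : is_split G = [exists C, good G C].
Proof.
apply/existsP/existsP => [[C /existsP[I]] | [C g]].
  by rewrite split_good => /andP[_ g]; exists C.
by exists C; apply/existsP; exists (~: C); rewrite split_good eqxx.
Qed.

Lemma inQ G v : (v \in questioning_set G) =
  [exists C, good G C && (v \in C)] && [exists C, good G C && (v \notin C)].
Proof.
rewrite inE; congr (_ && _).
  apply/existsP/existsP => [[C /existsP[I]] | [C /andP[g vC]]].
    by rewrite split_good => /andP[/andP[_ g] vC]; exists C; rewrite g.
  by exists C; apply/existsP; exists (~: C); rewrite split_good eqxx g.
apply/existsP/existsP => [[C /existsP[I]] | [C /andP[g vC]]].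
  by rewrite split_good => /andP[/andP[/eqP-> g] vC]; exists C; rewrite g -in_setC.
by exists C; apply/existsP; exists (~: C); rewrite split_good eqxx g in_setC.
Qed.

Lemma goodP G C : reflect ((forall x y, x \in C -> y \in C -> x != y -> adj G x y) /\
   (forall x y, x \notin C -> y \notin C -> ~~ adj G x y)) (good G C).
Proof.
apply: (iffP andP) => [[/cliqueP c /indepP i] | [c i]]; split.
- exact: c.
- by move=> x y xC yC; apply: i; rewrite inE.
- exact/cliqueP.
- by apply/indepP => x y; rewrite !inE; apply: i.
Qed.

Lemma L1 G C C' x z : good G C -> good G C' -> x \in C -> z \in C ->
  x \notin C' -> z \notin C' -> x = z.
Proof.
move=> /goodP[c _] /goodP[_ i'] xC zC xC' zC'.
apply/eqP; apply/negPn/negP => nxz.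
by have := i' x z xC' zC'; rewrite (c x z xC zC nxz).
Qed.

Lemma L2 G C C' x z : good G C -> good G C' -> x \notin C -> z \notin C ->
  x \in C' -> z \in C' -> x = z.
Proof. by move=> g g' *; apply: (L1 g' g). Qed.

Lemma grow G C y : good G C -> y \notin C -> (forall z, z \in C -> adj G y z) ->
  good G (y |: C).
Proof.
move=> /goodP[c i] yC H; apply/goodP; split.
  move=> a b; rewrite !in_setU1 => /predU1P[->|aC] /predU1P[->|bC]; rewrite ?eqxx //.
  - by move=> _; apply: H.
  - by move=> _; rewrite adjC; apply: H.
  - exact: c.
move=> a b; rewrite !in_setU1 !negb_or => /andP[_ aC] /andP[_ bC]; exact: i.
Qed.

Lemma shrink G C x : good G C -> x \in C -> (forall y, y \notin C -> ~~ adj G x y) ->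
  good G (C :\ x).
Proof.
move=> /goodP[c i] xC H; apply/goodP; split.
  by move=> a b; rewrite !in_setD1 => /andP[_ aC] /andP[_ bC]; apply: c.
move=> a b; rewrite !in_setD1 => /nandP[/negbNE/eqP->|aC] /nandP[/negbNE/eqP->|bC];
  rewrite ?adjxx //.
- exact: H.
- by rewrite adjC; apply: H.
- exact: i.
Qed.

Lemma maxgood G : is_split G -> exists C, good G C /\ forall C', good G C' -> #|C'| <= #|C|.
Proof.
rewrite is_split_good => /existsP[C0 g0].
case: (arg_maxnP (fun C => #|C|) g0) => C gC H.
by exists C; split.
Qed.

Definition X1 G C := [set x in C | [forall y, (y \notin C) ==> ~~ adj G x y]].

Lemma X1P G C x : reflect (x \in C /\ forall y, y \notin C -> ~~ adj G x y) (x \in X1 G C).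
Proof.
rewrite inE; apply: (iffP andP) => [[xC /forallP H] | [xC H]]; split => //.
  by move=> y yC; move/implyP: (H y); apply.
by apply/forallP => y; apply/implyP; apply: H.
Qed.

Section Max.
Variables (G : {set {set V}}) (C : {set V}).
Hypothesis gC : good G C.
Hypothesis maxC : forall C', good G C' -> #|C'| <= #|C|.

Lemma nofull y : y \notin C -> ~ (forall z, z \in C -> adj G y z).
Proof.
move=> yC H; have := maxC (grow gC yC H).
by rewrite cardsU1 yC ltnn.
Qed.

Lemma X1_Q : X1 G C \subset questioning_set G.
Proof.
apply/subsetP => x /X1P[xC H]; rewrite inQ; apply/andP; split; apply/existsP.
  by exists C; rewrite gC xC.
by exists (C :\ x); rewrite (shrink gC xC H) in_setD1 eqxx.
Qed.

Lemma QC_X1 x : x \in questioning_set G -> x \in C -> x \in X1 G C.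
Proof.
rewrite inQ => /andP[_ /existsP[C' /andP[g' xC']]] xC.
apply/X1P; split => // y yC; apply/negP => axy.
have yC' : y \in C'.
  apply/negPn/negP => yC'; move/goodP: g' => [_ i'].
  by have := i' x y xC' yC'; rewrite axy.
apply: (nofull yC) => z zC.
case: (eqVneq z x) => [->|nzx]; first by rewrite adjC.
have zC' : z \in C'.
  by apply/negPn/negP => zC'; move: nzx; rewrite (L1 gC g' zC xC zC' xC') eqxx.
move/goodP: g' => [c' _]; apply: c' => //.
by apply: contraTneq zC => <-.
Qed.

Lemma QI x : x \in questioning_set G -> x \notin C ->
  exists2 w, w \in X1 G C & forall z, z \in C -> z != w -> adj G x z.
Proof.
rewrite inQ => /andP[/existsP[C' /andP[g' xC']] _] xC.
have [w [wC wC']] : exists w, w \in C /\ w \notin C'.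
  case: (pickP [pred w | (w \in C) && (w \notin C')]) => [w /andP[? ?]|H]; first by exists w.
  exfalso; apply: (nofull xC) => z zC.
  have zC' : z \in C' by apply/negPn/negP => zC'; have := H z; rewrite /= zC zC'.
  move/goodP: g' => [c' _]; apply: c' => //.
  by apply: contraTneq zC => <-.
have inC' z : z \in C -> z != w -> z \in C'.
  by move=> zC nzw; apply/negPn/negP => zC'; move: nzw; rewrite (L1 gC g' zC wC zC' wC') eqxx.
have adjx z : z \in C -> z != w -> adj G x z.
  move=> zC nzw; move/goodP: g' => [c' _]; apply: c' => //; first exact: inC'.
  by apply: contraTneq zC => <-.
exists w => //; apply/X1P; split => // y yC; apply/negP => awy.
case: (eqVneq y x) => [eyx|nyx].
  apply: (nofull xC) => z zC; case: (eqVneq z w) => [->|]; first by rewrite adjC -eyx.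
  exact: adjx z zC.
have yC' : y \in C' -> False.
  by move=> yC'; move: nyx; rewrite (L2 gC g' xC yC xC' yC') eqxx.
apply: yC'; apply/negPn/negP => yC'.
move/goodP: g' => [_ i']; by have := i' w y wC' yC'; rewrite awy.
Qed.
End Max.

Notation QS := questioning_set.

Lemma X1_single G C y w u : y \notin C -> (forall z, z \in C -> z != w -> adj G y z) ->
  u \in X1 G C -> u = w.
Proof.
move=> yC H /X1P[uC Hu]; apply/eqP/negPn/negP => nuw.
by have := Hu y yC; rewrite adjC (H u uC nuw).
Qed.

Lemma dich G : is_split G -> is_clique G (QS G) || is_indep G (QS G).
Proof.
case/maxgood => C [gC maxC].
have [sQC|] := boolP (QS G \subset C).
  apply/orP; left; apply/cliqueP => x y xQ yQ nxy.
  by move/goodP: gC => [c _]; apply: c => //; apply: (subsetP sQC).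
case/subsetPn => y yQ yC.
have [w wX Hw] := QI gC maxC yQ yC.
apply/orP; right; apply/indepP => u v uQ vQ.
have X1u : u \in C -> u = w.
  by move=> uC; apply: (X1_single yC Hw); apply: QC_X1.
have X1v : v \in C -> v = w.
  by move=> vC; apply: (X1_single yC Hw); apply: QC_X1.
have [uC|uC] := boolP (u \in C); have [vC|vC] := boolP (v \in C).
- by rewrite (X1u uC) (X1v vC) adjxx.
- by case/X1P: (QC_X1 gC maxC uQ uC) => _; apply.
- by rewrite adjC; case/X1P: (QC_X1 gC maxC vQ vC) => _; apply.
- by move/goodP: gC => [_ i]; apply: i.
Qed.

Lemma Qclique_sub G C : good G C -> (forall C', good G C' -> #|C'| <= #|C|) ->
  is_clique G (QS G) -> QS G \subset C.
Proof.
move=> gC maxC /cliqueP cQ; apply/subsetP => y yQ; apply/negPn/negP => yC.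
have [w wX Hw] := QI gC maxC yQ yC.
have wQ : w \in QS G by apply: (subsetP (X1_Q gC)).
case/X1P: (wX) => wC Hw'.
have nyw : y != w by apply: contraTneq wC => <-.
by have := Hw' y yC; rewrite adjC (cQ y w yQ wQ nyw).
Qed.

Definition gof (r : rel V) : {set {set V}} :=
  [set e | [exists x, exists y, (e == [set x; y]) && r x y]].

Lemma adj_gof (r : rel V) u v : irreflexive r -> symmetric r -> adj (gof r) u v = r u v.
Proof.
move=> irr sym; rewrite /adj inE.
apply/andP/idP => [[nuv /existsP[x /existsP[y /andP[/eqP e rxy]]]] | ruv].
  have uxy : u \in [set x; y] by rewrite -e !inE eqxx.
  have vxy : v \in [set x; y] by rewrite -e !inE eqxx orbT.
  move: uxy vxy nuv; rewrite !inE => /orP[]/eqP-> /orP[]/eqP->; rewrite ?eqxx //.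
  by rewrite sym.
split; first by apply: contraTneq ruv => ->; rewrite irr.
by apply/existsP; exists u; apply/existsP; exists v; rewrite eqxx ruv.
Qed.

Lemma graph_gof (r : rel V) : irreflexive r -> is_graph (gof r).
Proof.
move=> irr; apply/forall_inP => e; rewrite inE => /existsP[x /existsP[y /andP[/eqP-> rxy]]].
rewrite cards2; case: (eqVneq x y) rxy => [->|//]; by rewrite irr.
Qed.

Lemma graph_ext G G' : is_graph G -> is_graph G' -> (forall u v, adj G u v = adj G' u v) -> G = G'.
Proof.
move=> /forall_inP gG /forall_inP gG' H; apply/setP => e.
wlog suff: G G' gG gG' H / e \in G -> e \in G'.
  by move=> W; apply/idP/idP; apply: W => // u v; rewrite H.
move=> eG; have /cards2P[x [y [nxy exy]]] := gG e eG.
have : adj G x y by rewrite /adj nxy -exy.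
by rewrite H => /andP[_]; rewrite exy.
Qed.

Definition brel Q A (f : {ffun V -> {set V}}) : rel V := fun u v =>
  (u != v) && [|| (u \in Q :|: A) && (v \in Q :|: A), (u \in A) && (v \in f u) |
                  (v \in A) && (u \in f v)].

Lemma brel_irr Q A f : irreflexive (brel Q A f).
Proof. by move=> u; rewrite /brel eqxx. Qed.

Lemma brel_sym Q A f : symmetric (brel Q A f).
Proof.
move=> u v; rewrite /brel eq_sym; congr (_ && _).
by case: (u \in Q :|: A); case: (v \in Q :|: A); case: (u \in A); case: (v \in A); case: (v \in f u); case: (u \in f v).
Qed.

Definition build Q A f := gof (brel Q A f).

Lemma adj_build Q A f u v : adj (build Q A f) u v = brel Q A f u v.
Proof. exact: adj_gof (@brel_irr Q A f) (@brel_sym Q A f). Qed.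

Definition fam Q A : V -> pred {set V} := fun a =>
  if a \in A then (fun S : {set V} => (S \subset ~: (Q :|: A)) && (S != set0)) else (fun S : {set V} => S == set0).

Definition keyA G := [set v | (v \notin QS G) && [exists q in QS G, adj G v q]].

Section Build.
Variables (Q A : {set V}) (f : {ffun V -> {set V}}).
Hypotheses (Q2 : 1 < #|Q|) (dQA : [disjoint Q & A]) (ff : f \in family (fam Q A)).
Let K := Q :|: A.
Let B := build Q A f.

Lemma fA a : a \in A -> f a \subset ~: K /\ f a != set0.
Proof. by move=> aA; move/familyP: ff => /(_ a); rewrite /fam aA /in_mem /= => /andP. Qed.

Lemma fnA a : a \notin A -> f a = set0.
Proof. by move=> aA; move/familyP: ff => /(_ a); rewrite /fam (negbTE aA) /in_mem /= => /eqP. Qed.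

Lemma QnA q : q \in Q -> q \notin A.
Proof. by move=> qQ; rewrite (disjointFr dQA qQ). Qed.

Lemma AK a : a \in A -> a \in K.
Proof. by move=> aA; rewrite inE aA orbT. Qed.

Lemma QK q : q \in Q -> q \in K.
Proof. by move=> qQ; rewrite inE qQ. Qed.

Lemma brel_out u q : u \notin K -> q \in Q -> brel Q A f u q = false.
Proof.
move=> uK qQ; rewrite /brel (negbTE uK) /=.
have uA : u \notin A by apply: contra uK; apply: AK.
by rewrite (negbTE uA) (negbTE (QnA qQ)) /= andbF.
Qed.

Lemma brel_in u v : u \in K -> v \in K -> u != v -> brel Q A f u v.
Proof. by move=> uK vK nuv; rewrite /brel nuv -/K uK vK. Qed.

Lemma good_K : good B K.
Proof.
apply/goodP; split=> u v; rewrite !adj_build.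
  exact: brel_in.
move=> uK vK; rewrite /brel (negbTE uK) /=.
have uA : u \notin A by apply: contra uK; apply: AK.
have vA : v \notin A by apply: contra vK; apply: AK.
by rewrite (negbTE uA) (negbTE vA) andbF.
Qed.

Lemma good_Kq q : q \in Q -> good B (K :\ q).
Proof.
move=> qQ; apply: shrink good_K (QK qQ) _ => y yK.
by rewrite adj_build brel_sym brel_out.
Qed.

Lemma two_Q : exists x y, [/\ x \in Q, y \in Q & x != y].
Proof. by apply/card_gt1P. Qed.

Lemma b3 C b : good B C -> b \notin K -> b \notin C.
Proof.
move=> /goodP[c i] bK; apply/negP => bC.
have [x [y [xQ yQ nxy]]] := two_Q.
have out z : z \in Q -> z \notin C.
  move=> zQ; apply/negP => zC.
  have nbz : b != z by apply: contraTneq (QK zQ) => <-.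
  by have := c b z bC zC nbz; rewrite adj_build brel_out.
have := i x y (out x xQ) (out y yQ).
by rewrite adj_build brel_in ?QK.
Qed.

Lemma b4 C a : good B C -> a \in A -> a \in C.
Proof.
move=> gC aA; have [sf nf] := fA aA.
have [b bf] := set0Pn _ nf.
have bK : b \notin K by rewrite -in_setC; apply: (subsetP sf).
have bC := b3 gC bK.
apply/negPn/negP => aC; move/goodP: gC => [_ i].
have := i a b aC bC; rewrite adj_build /brel aA bf /= orbT andbT.
by have -> : a != b by apply: contraTneq bK => <-; rewrite negbK; apply: AK.
Qed.

Lemma QS_build : QS B = Q.
Proof.
apply/setP => v; rewrite inQ; apply/andP/idP => [[/existsP[C1 /andP[g1 v1]] /existsP[C2 /andP[g2 v2]]] | vQ].
  have vK : v \in K by apply/negPn/negP => vK; have := b3 g1 vK; rewrite v1.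
  have vA : v \notin A by apply: contra v2; apply: b4.
  by move: vK; rewrite inE (negbTE vA) orbF.
split; apply/existsP.
  by exists K; rewrite good_K QK.
by exists (K :\ v); rewrite good_Kq // in_setD1 eqxx.
Qed.

Lemma keyA_build : keyA B = A.
Proof.
apply/setP => v; rewrite inE QS_build.
apply/andP/idP => [[vQ /existsP[q /andP[qQ aq]]] | vA].
  move: aq; rewrite adj_build; have [vK|vK] := boolP (v \in K); last by rewrite brel_out.
  by move: vK; rewrite inE (negbTE vQ).
split; first by apply/negP => vQ; move: (QnA vQ); rewrite vA.
have [x [_ [xQ _ _]]] := two_Q.
apply/existsP; exists x; rewrite xQ adj_build brel_in //; [exact: AK|exact: QK|].
by apply: contraTneq xQ => <-; apply/negP => vQ; move: (QnA vQ); rewrite vA.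
Qed.

Lemma build_S : [&& is_graph B, is_split B, 2 <= #|QS B| & is_clique B (QS B)].
Proof.
apply/and4P; split.
- exact: graph_gof (@brel_irr Q A f).
- by rewrite is_split_good; apply/existsP; exists K; apply: good_K.
- by rewrite QS_build.
rewrite QS_build.
apply/cliqueP => x y xQ yQ nxy; rewrite adj_build; apply: brel_in => //; exact: QK.
Qed.


Lemma fa_char a : a \in A -> f a = [set b | (b \notin K) && adj B a b].
Proof.
move=> aA; have [sf _] := fA aA; apply/setP => b; rewrite inE adj_build.
apply/idP/andP => [bf | [bK]].
  have bK : b \notin K by rewrite -in_setC; apply: (subsetP sf).
  split => //; rewrite /brel aA bf /= orbT andbT.
  by apply: contraTneq bK => <-; rewrite negbK; apply: AK.
rewrite /brel (negbTE bK) andbF /= => /andP[_ /orP[/andP[_ //]|/andP[bA _]]].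
by move: bK; rewrite inE bA orbT.
Qed.
End Build.

Lemma build_inj Q A f g : f \in family (fam Q A) -> g \in family (fam Q A) ->
  1 < #|Q| -> [disjoint Q & A] -> build Q A f = build Q A g -> f = g.
Proof.
move=> ff fg Q2 dQA e; apply/ffunP => a.
have [aA|aA] := boolP (a \in A).
  by rewrite (fa_char ff aA) (fa_char fg aA) e.
by rewrite (fnA ff aA) (fnA fg aA).
Qed.

Lemma keyAE G v : (v \in keyA G) = (v \notin QS G) && [exists q in QS G, adj G v q].
Proof. by rewrite /keyA in_set. Qed.

Section Decomp.
Variables (G : {set {set V}}) (C : {set V}).
Hypotheses (gG : is_graph G) (gC : good G C) (maxC : forall C', good G C' -> #|C'| <= #|C|).
Hypotheses (Q2 : 1 < #|QS G|) (cQ : is_clique G (QS G)).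
Let Q := QS G.
Let A := keyA G.
Definition fG : {ffun V -> {set V}} :=
  [ffun a => if a \in A then [set b | (b \notin C) && adj G a b] else set0].

Lemma QsubC : Q \subset C.
Proof. exact: Qclique_sub. Qed.

Lemma QX1 x : x \in C -> (x \in Q) = (x \in X1 G C).
Proof.
move=> xC; apply/idP/idP => [xQ|xX]; first exact: QC_X1.
exact: (subsetP (X1_Q gC)).
Qed.

Lemma A_eq : A = C :\: Q.
Proof.
have [x [y [xQ yQ nxy]]] : exists x y, [/\ x \in Q, y \in Q & x != y] by apply/card_gt1P.
apply/setP => v; rewrite /A keyAE in_setD -/Q.
have [vQ|vQ] := boolP (v \in Q); rewrite ?vQ //=.
have [vC|vC] := boolP (v \in C).
  apply/existsP.
  have [ex|nex] := eqVneq v x.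
    exists y; rewrite yQ; move/goodP: gC => [c _]; apply: c => //.
      by apply: (subsetP QsubC).
    by rewrite ex.
  exists x; rewrite xQ; move/goodP: gC => [c _]; apply: c => //.
  exact: (subsetP QsubC).
apply/negbTE/negP => /existsP[q /andP[qQ aq]].
have /X1P[_ H] : q \in X1 G C by rewrite -QX1 // (subsetP QsubC).
by have := H v vC; rewrite adjC aq.
Qed.

Lemma KC : Q :|: A = C.
Proof.
apply/setP => v; rewrite A_eq in_setU in_setD; case vQ: (v \in Q) => //=.
by rewrite (subsetP QsubC _ vQ).
Qed.

Lemma fG_fam : fG \in family (fam Q A).
Proof.
apply/familyP => a; rewrite /fam ffunE.
case aA: (a \in A); rewrite /in_mem /=; last by rewrite eqxx.
rewrite KC; apply/andP; split.
  by apply/subsetP => b; rewrite !inE => /andP[].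
move: aA; rewrite A_eq in_setD => /andP[aQ aC].
move: aQ; rewrite QX1 // inE aC /= negb_forall => /existsP[y].
rewrite negb_imply negbK => /andP[yC ay].
by apply/set0Pn; exists y; rewrite inE; apply/andP; split.
Qed.

Lemma fGE u v : (v \in fG u) = [&& u \in A, v \notin C & adj G u v].
Proof. by rewrite ffunE; case: (u \in A); rewrite ?inE. Qed.

Lemma adjG_brel u v : adj G u v = brel Q A fG u v.
Proof.
have AC w : w \in A -> w \in C by rewrite A_eq in_setD => /andP[].
have QXa w w' : w \in C -> w \notin A -> w' \notin C -> adj G w w' = false.
  move=> wC wA w'C.
  have : w \in Q by move: wA; rewrite A_eq in_setD wC andbT negbK.
  rewrite QX1 // => /X1P[_ H]; exact: negbTE (H w' w'C).
rewrite /brel KC !fGE.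
have [uC|uC] := boolP (u \in C); have [vC|vC] := boolP (v \in C) => /=.
- move/goodP: gC => [c _]; apply/idP/idP => [a|nuv]; first by rewrite (adj_neq a).
  by rewrite andbT in nuv; apply: c.
- have vA : v \in A = false by apply/negbTE; apply: contra vC; apply: AC.
  rewrite vA /= ?andbF ?orbF.
  case uA: (u \in A) => /=; last by rewrite ?andbF QXa ?uA.
  by case a: (adj G u v); rewrite ?andbF ?andbT // (adj_neq a).
- have uA : u \in A = false by apply/negbTE; apply: contra uC; apply: AC.
  rewrite uA /= ?andbF /= adjC.
  case vA: (v \in A) => /=; last by rewrite ?andbF QXa ?vA.
  by case a: (adj G v u); rewrite ?andbF ?andbT // eq_sym (adj_neq a).
- have uA : u \in A = false by apply/negbTE; apply: contra uC; apply: AC.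
  have vA : v \in A = false by apply/negbTE; apply: contra vC; apply: AC.
  rewrite uA vA /= ?andbF; move/goodP: gC => [_ i]; exact: negbTE (i u v uC vC).
Qed.

Lemma G_build : G = build Q A fG.
Proof.
apply: graph_ext => //; first exact: graph_gof (@brel_irr Q A fG).
by move=> u v; rewrite adj_build adjG_brel.
Qed.
End Decomp.

Definition comp G : {set {set V}} := [set e : {set V} | (#|e| == 2) && (e \notin G)].

Lemma adj_comp G u v : adj (comp G) u v = (u != v) && ~~ adj G u v.
Proof.
rewrite /adj inE cards2; case: (eqVneq u v) => //= _.
Qed.

Lemma graph_comp G : is_graph (comp G).
Proof. by apply/forall_inP => e; rewrite inE => /andP[]. Qed.

Lemma compK G : is_graph G -> comp (comp G) = G.
Proof.
move=> gG; apply: graph_ext => //; first exact: graph_comp.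
move=> u v; rewrite !adj_comp; case: (eqVneq u v) => [->|//=]; first by rewrite adjxx.
by rewrite negbK.
Qed.

Lemma good_comp G C : good (comp G) C = good G (~: C).
Proof.
apply/goodP/goodP => [[c i]|[c i]]; split.
- move=> x y; rewrite !in_setC => xC yC nxy; have := i x y xC yC.
  by rewrite adj_comp nxy negbK.
- move=> x y; rewrite !in_setC !negbK => xC yC; case: (eqVneq x y) => [->|nxy]; first by rewrite adjxx.
  by have := c x y xC yC nxy; rewrite adj_comp nxy.
- move=> x y xC yC nxy; rewrite adj_comp nxy /=.
  by apply: i; rewrite in_setC negbK.
- move=> x y xC yC; rewrite adj_comp negb_and negbK.
  case: (eqVneq x y) => //= nxy.
rewrite negbK; apply: c => //; by rewrite in_setC.
Qed.

Lemma QS_comp G : QS (comp G) = QS G.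
Proof.
apply/setP => v; rewrite !inQ [in LHS]andbC; congr (_ && _).
  apply/existsP/existsP => [[C /andP[g vC]]|[C /andP[g vC]]].
    by exists (~: C); rewrite good_comp in g; rewrite g in_setC.
  by exists (~: C); rewrite good_comp setCK g in_setC negbK.
apply/existsP/existsP => [[C /andP[g vC]]|[C /andP[g vC]]].
  by exists (~: C); rewrite good_comp in g; rewrite g in_setC negbK.
by exists (~: C); rewrite good_comp setCK g in_setC.
Qed.

Lemma split_comp G : is_split (comp G) = is_split G.
Proof.
rewrite !is_split_good; apply/existsP/existsP => [[C g]|[C g]].
  by exists (~: C); rewrite -good_comp.
by exists (~: C); rewrite good_comp setCK.
Qed.

Lemma clique_comp G Q : is_clique (comp G) Q = is_indep G Q.
Proof.
apply/cliqueP/indepP => [c x y xQ yQ|i x y xQ yQ nxy].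
  case: (eqVneq x y) => [->|nxy]; first by rewrite adjxx.
  by have := c x y xQ yQ nxy; rewrite adj_comp nxy.
by rewrite adj_comp nxy i.
Qed.

Definition S1 := [set G : {set {set V}} | [&& is_graph G, is_split G, 2 <= #|QS G| & is_clique G (QS G)]].
Definition S2 := [set G : {set {set V}} | [&& is_graph G, is_split G, 2 <= #|QS G| & is_indep G (QS G)]].
Definition Sall := [set G : {set {set V}} | [&& is_graph G, is_split G & 2 <= #|QS G|]].

Lemma Sall_U : Sall = S1 :|: S2.
Proof.
apply/setP => G; rewrite !inE.
case: (is_graph G) => //=; case sG: (is_split G) => //=; case: (2 <= #|QS G|) => //=.
by rewrite (dich sG).
Qed.

Lemma S12_disj : S1 :&: S2 = set0.
Proof.
apply/setP => G; rewrite !inE.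
apply/negbTE/negP => /andP[/and4P[_ _ Q2 /cliqueP c] /and4P[_ _ _ /indepP i]].
have [x [y [xQ yQ nxy]]] : exists x y, [/\ x \in QS G, y \in QS G & x != y] by apply/card_gt1P.
by have := i x y xQ yQ; rewrite (c x y xQ yQ nxy).
Qed.

Lemma S2_img : S2 = comp @: S1.
Proof.
apply/setP => G; apply/idP/imsetP.
  rewrite inE => /and4P[gG sG Q2 iQ]; exists (comp G); last by rewrite compK.
  by rewrite inE graph_comp split_comp QS_comp sG Q2 clique_comp iQ.
case=> H; rewrite !inE => /and4P[gH sH Q2 cH] ->.
by rewrite graph_comp split_comp QS_comp Q2 sH -clique_comp compK.
Qed.

Lemma card_Sall : #|Sall| = 2 * #|S1|.
Proof.
have e2 : #|S2| = #|S1|.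
  rewrite S2_img card_in_imset // => G H; rewrite !inE => /and4P[gG _ _ _] /and4P[gH _ _ _] e.
  by rewrite -(compK gG) e compK.
by rewrite Sall_U cardsU S12_disj cards0 subn0 e2 mul2n addnn.
Qed.

Lemma card_fam Q A : #|family (fam Q A)| = (2 ^ #|~: (Q :|: A)| - 1) ^ #|A|.
Proof.
rewrite card_family foldrE big_map big_enum /=.
rewrite (bigID (mem A)) /= -[RHS]muln1; congr (_ * _).
  rewrite -prod_nat_const; apply: eq_bigr => a aA.
  rewrite /fam aA.
  rewrite -(card_powerset (~: (Q :|: A))) (cardsD1 set0) powersetE sub0set add1n subn1 /=.
  apply: eq_card => S; rewrite in_setD1 powersetE /in_mem /=.
  by rewrite andbC.
apply: big1 => a aA; rewrite /fam (negbTE aA).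
by apply: (@eq_card1 _ set0) => S; rewrite /in_mem /=.
Qed.

Lemma fiber Q A : #|[set G in S1 | (QS G, keyA G) == (Q, A)]| =
  if (1 < #|Q|) && [disjoint Q & A] then (2 ^ #|~: (Q :|: A)| - 1) ^ #|A| else 0.
Proof.
case: ifP => [/andP[Q2 dQA]|nv]; last first.
  apply/eqP; rewrite cards_eq0; apply/eqP/setP => G; rewrite !inE.
  apply/negbTE/negP => /andP[/and4P[gG sG Q2 cQ] /eqP[eQ eA]].
  move: nv; rewrite -eQ -eA Q2 /= disjoints_subset => /negbT/negP; apply.
  by apply/subsetP => v vQ; rewrite inE keyAE vQ.
rewrite -card_fam.
have -> : [set G in S1 | (QS G, keyA G) == (Q, A)] = build Q A @: family (fam Q A).
  apply/setP => G; apply/idP/imsetP.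
    rewrite !inE => /andP[/and4P[gG sG Q2' cQ] /eqP[eQ eA]].
    have [C [gC maxC]] := maxgood sG.
    exists (fG G C).
      by rewrite -eQ -eA; apply: fG_fam.
    by rewrite -eQ -eA; apply: G_build.
  case=> f ff ->; rewrite !inE (build_S Q2 dQA ff) /=.
  by rewrite (QS_build Q2 dQA ff) (keyA_build Q2 dQA ff).
rewrite card_in_imset // => f g ff fg; exact: build_inj ff fg Q2 dQA.
Qed.

Lemma card_S1 : #|S1| = \sum_(Q : {set V}) \sum_(A : {set V})
  (if (1 < #|Q|) && [disjoint Q & A] then (2 ^ #|~: (Q :|: A)| - 1) ^ #|A| else 0).
Proof.
rewrite -sum1_card (partition_big (fun G => (QS G, keyA G)) predT) //=.
rewrite pair_big /=; apply: eq_bigr => [[Q A]] _ /=.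
by rewrite -fiber -sum1_card; apply: eq_bigl => G; rewrite inE.
Qed.
End S.

Lemma sum_sub (T : finType) (D : {set T}) (g : nat -> nat) :
  \sum_(A : {set T} | A \subset D) g #|A| = \sum_(c < #|D|.+1) 'C(#|D|, c) * g c.
Proof.
rewrite (partition_big (fun A : {set T} => (inord #|A| : 'I_(#|D|.+1))) predT) //=.
apply: eq_bigr => c _.
rewrite (eq_bigr (fun _ => g c)); last first.
  move=> A /andP[sAD /eqP <-]; rewrite inordK //; by rewrite ltnS subset_leq_card.
rewrite sum_nat_const; congr (_ * _).
rewrite -cards_draws; apply: eq_card => A; rewrite inE -topredE /=.
case sAD: (A \subset D) => //=.
apply/eqP/eqP => [<-|e]; first by rewrite inordK // ltnS subset_leq_card.
by apply: val_inj; rewrite /= inordK ?e // -e ltnS subset_leq_card.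
Qed.

Lemma cardC_n n (X : {set 'I_n}) : #|~: X| = n - #|X|.
Proof.
have := cardsC X; rewrite card_ord => e.
apply: (@addnI #|X|); rewrite e subnKC //.
by have := max_card (mem X); rewrite card_ord.
Qed.

Lemma arith n : \sum_(Q : {set 'I_n}) \sum_(A : {set 'I_n})
  (if (1 < #|Q|) && [disjoint Q & A] then (2 ^ #|~: (Q :|: A)| - 1) ^ #|A| else 0)
  = \sum_(2 <= q < n.+1) \sum_(0 <= c < (n - q).+1)
          'C(n, q) * 'C(n - q, c) * (2 ^ (n - c - q) - 1) ^ c.
Proof.
pose g q := if 1 < q then \sum_(c < (n - q).+1) 'C(n - q, c) * (2 ^ (n - c - q) - 1) ^ c else 0.
transitivity (\sum_(Q : {set 'I_n} | Q \subset setT) g #|Q|).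
  apply: eq_big => [Q|Q _]; first by rewrite subsetT.
  rewrite /g; case: ifP => Q2 /=; last by rewrite big1.
  rewrite -big_mkcond /=.
  rewrite (eq_bigl (fun A : {set 'I_n} => A \subset ~: Q)); last by move=> A; rewrite disjoint_sym disjoints_subset.
  rewrite (eq_bigr (fun A : {set 'I_n} => (fun c => (2 ^ (n - c - #|Q|) - 1) ^ c) #|A|)); last first.
    move=> A sA /=; congr ((2 ^ _ - 1) ^ _).
    have dQA : [disjoint Q & A] by rewrite disjoint_sym disjoints_subset.
    rewrite cardC_n cardsU (disjoint_setI0 dQA) cards0 subn0.
    by rewrite subnDA subnAC.
  by rewrite (sum_sub (~: Q) (fun c => (2 ^ (n - c - #|Q|) - 1) ^ c)) cardC_n.
rewrite sum_sub cardsT card_ord.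
rewrite big_geq_mkord [RHS]big_mkcond; apply: eq_bigr => q _.
rewrite /g; case: ifP => q2 //=; last by rewrite muln0.
rewrite big_mkord big_distrr; apply: eq_bigr => c _.
by rewrite /= mulnA.
Qed.

Theorem lemma8p6 (n : nat) :
  #|[set G : {set {set 'I_n}} |
      [&& is_graph G, is_split G & 2 <= #|questioning_set G|]]|
  = 2 * \sum_(2 <= q < n.+1) \sum_(0 <= c < (n - q).+1)
          'C(n, q) * 'C(n - q, c) * (2 ^ (n - c - q) - 1) ^ c.
Proof.
have -> : [set G : {set {set 'I_n}} |
      [&& is_graph G, is_split G & 2 <= #|questioning_set G|]] = Sall n by [].
by rewrite card_Sall card_S1 arith.
Qed.
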